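(* Let $T=(T,\mu,\iota)$ be a normal lax double monad on an equipment $\mathcal K$. If the vertical morphism $g\colon C\to A$ has a left adjoint in the vertical $2$-category $V(\mathcal K)$, then the cell $\iota_{g^*}$ (where $g^*\colon A\nrightarrow C$ is the conjoint of $g$) satisfies the right Beck–Chevalley condition.
   Context: Double categories: a double category has objects, vertical morphisms (composition $\circ$), horizontal morphisms $J\colon A\nrightarrow B$ (composition $\odot$ in diagrammatic order, units $1_A$, weakly associative/unital) and cells with horizontal source $J\colon A\nrightarrow B$, horizontal target $K\colon C\nrightarrow D$, vertical sides $f\colon A\to C$, $g\colon B\to D$. Vertical cells (units as horizontal source and target) form, with objects and vertical morphisms, the $2$-category $V(\mathcal K)$. A cell $\phi\colon J\Rightarrow K$ with sides $f,g$ is cartesian if every cell $H\Rightarrow K$ with sides $f\circ h,g\circ k$ factors uniquely through $\phi$ via a cell $H\Rightarrow J$ with sides $h,k$; opcartesian dually. The companion of $f\colon A\to C$ is $f_*=1_C(f,\mathrm{id})\colon A\nrightarrow C$ (given by a cartesian cell $f_*\Rightarrow 1_C$ with sides $f,\mathrm{id}_C$, equivalently an opcartesian cell $1_A\Rightarrow f_*$ with sides $\mathrm{id}_A,f$); the conjoint of $g\colon C\to A$ is $g^*=1_A(\mathrm{id},g)\colon A\nrightarrow C$. An equipment has all companions and conjoints. A normal lax double monad $(T,\mu,\iota)$ on $\mathcal K$: a lax double functor $T\colon\mathcal K\to\mathcal K$ preserving vertical structure and horizontal units strictly and horizontal composition up to coherent compositor cells, with double transformations $\mu\colon T^2\Rightarrow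 T$, $\iota\colon\mathrm{id}\Rightarrow T$ satisfying the monad axioms; $\iota$ consists of vertical morphisms $\iota_A\colon A\to TA$ and cells $\iota_J\colon J\Rightarrow TJ$ with sides $\iota_A,\iota_B$, natural and compatible with compositors, $\iota_{1_A}=1_{\iota_A}$. Right Beck–Chevalley condition: for $J\colon A\nrightarrow B$ let $\iota_{J*}\colon J\odot\iota_{B*}\Rightarrow\iota_{A*}\odot TJ$ be the horizontal composite of the opcartesian cell $1_A\Rightarrow\iota_{A*}$ (sides $\mathrm{id}_A,\iota_A$), $\iota_J$, and the cartesian cell $\iota_{B*}\Rightarrow 1_{TB}$ (sides $\iota_B,\mathrm{id}_{TB}$); $\iota_J$ satisfies the right Beck–Chevalley condition if $\iota_{J*}$ is invertible. *)

(* Defs.v *)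
(* no library of double categories exists, so we set up
   (pseudo) double categories, equipments, normal lax double monads
   in a "flat" style: each kind of datum is a type equipped with boundary
   functions, and composition operations are total functions whose axioms
   are only imposed on composable data. *)
Set Implicit Arguments.
Unset Strict Implicit.

Record DoubleCat := {
  Ob : Type;
  Vm : Type;
  Hm : Type;
  Cl : Type;
  vdom : Vm -> Ob;  vcod : Vm -> Ob;
  vid : Ob -> Vm;
  vcomp : Vm -> Vm -> Vm;          (* vcomp g f = g o f *)
  hs : Hm -> Ob;  ht : Hm -> Ob;
  hunit : Ob -> Hm;
  hcomp : Hm -> Hm -> Hm;          (* hcomp J K = J (.) K, diagrammatic *)
  csrc : Cl -> Hm; ctgt : Cl -> Hm;
  cl : Cl -> Vm;  cr : Cl -> Vm;
  cid : Hm -> Cl;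
  vcc : Cl -> Cl -> Cl;            (* vcc a b : a then b (vertical) *)
  hid : Vm -> Cl;
  hcc : Cl -> Cl -> Cl;
  assoc : Hm -> Hm -> Hm -> Cl;   assoc_inv : Hm -> Hm -> Hm -> Cl;
  lunit : Hm -> Cl;  lunit_inv : Hm -> Cl;
  runit : Hm -> Cl;  runit_inv : Hm -> Cl;

  vid_dom : forall A, vdom (vid A) = A;
  vid_cod : forall A, vcod (vid A) = A;
  vcomp_dom : forall f g, vcod f = vdom g -> vdom (vcomp g f) = vdom f;
  vcomp_cod : forall f g, vcod f = vdom g -> vcod (vcomp g f) = vcod g;
  vcomp_id_r : forall f, vcomp f (vid (vdom f)) = f;
  vcomp_id_l : forall f, vcomp (vid (vcod f)) f = f;
  vcomp_assoc : forall f g h, vcod f = vdom g -> vcod g = vdom h ->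
    vcomp h (vcomp g f) = vcomp (vcomp h g) f;

  hunit_s : forall A, hs (hunit A) = A;
  hunit_t : forall A, ht (hunit A) = A;
  hcomp_s : forall J K, ht J = hs K -> hs (hcomp J K) = hs J;
  hcomp_t : forall J K, ht J = hs K -> ht (hcomp J K) = ht K;

  cl_dom : forall a, vdom (cl a) = hs (csrc a);
  cl_cod : forall a, vcod (cl a) = hs (ctgt a);
  cr_dom : forall a, vdom (cr a) = ht (csrc a);
  cr_cod : forall a, vcod (cr a) = ht (ctgt a);

  cid_src : forall J, csrc (cid J) = J;
  cid_tgt : forall J, ctgt (cid J) = J;
  cid_l : forall J, cl (cid J) = vid (hs J);
  cid_r : forall J, cr (cid J) = vid (ht J);
  vcc_src : forall a b, ctgt a = csrc b -> csrc (vcc a b) = csrc a;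
  vcc_tgt : forall a b, ctgt a = csrc b -> ctgt (vcc a b) = ctgt b;
  vcc_l : forall a b, ctgt a = csrc b -> cl (vcc a b) = vcomp (cl b) (cl a);
  vcc_r : forall a b, ctgt a = csrc b -> cr (vcc a b) = vcomp (cr b) (cr a);
  vcc_id_l : forall a, vcc (cid (csrc a)) a = a;
  vcc_id_r : forall a, vcc a (cid (ctgt a)) = a;
  vcc_assoc : forall a b c, ctgt a = csrc b -> ctgt b = csrc c ->
    vcc a (vcc b c) = vcc (vcc a b) c;

  hid_src : forall f, csrc (hid f) = hunit (vdom f);
  hid_tgt : forall f, ctgt (hid f) = hunit (vcod f);
  hid_l : forall f, cl (hid f) = f;
  hid_r : forall f, cr (hid f) = f;
  hid_vid : forall A, hid (vid A) = cid (hunit A);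
  hid_vcomp : forall f g, vcod f = vdom g ->
    vcc (hid f) (hid g) = hid (vcomp g f);

  hcc_src : forall a b, cr a = cl b -> csrc (hcc a b) = hcomp (csrc a) (csrc b);
  hcc_tgt : forall a b, cr a = cl b -> ctgt (hcc a b) = hcomp (ctgt a) (ctgt b);
  hcc_l : forall a b, cr a = cl b -> cl (hcc a b) = cl a;
  hcc_r : forall a b, cr a = cl b -> cr (hcc a b) = cr b;
  hcc_cid : forall J K, ht J = hs K -> hcc (cid J) (cid K) = cid (hcomp J K);
  interchange : forall a b a' b', cr a = cl b -> cr a' = cl b' ->
    ctgt a = csrc a' -> ctgt b = csrc b' ->
    vcc (hcc a b) (hcc a' b') = hcc (vcc a a') (vcc b b');

  assoc_src : forall J K L, ht J = hs K -> ht K = hs L ->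
    csrc (assoc J K L) = hcomp (hcomp J K) L;
  assoc_tgt : forall J K L, ht J = hs K -> ht K = hs L ->
    ctgt (assoc J K L) = hcomp J (hcomp K L);
  assoc_l : forall J K L, ht J = hs K -> ht K = hs L -> cl (assoc J K L) = vid (hs J);
  assoc_r : forall J K L, ht J = hs K -> ht K = hs L -> cr (assoc J K L) = vid (ht L);
  assoc_inv_src : forall J K L, ht J = hs K -> ht K = hs L ->
    csrc (assoc_inv J K L) = hcomp J (hcomp K L);
  assoc_inv_tgt : forall J K L, ht J = hs K -> ht K = hs L ->
    ctgt (assoc_inv J K L) = hcomp (hcomp J K) L;
  assoc_inv_l : forall J K L, ht J = hs K -> ht K = hs L ->
    cl (assoc_inv J K L) = vid (hs J);
  assoc_inv_r : forall J K L, ht J = hs K -> ht K = hs L ->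
    cr (assoc_inv J K L) = vid (ht L);
  assoc_iso1 : forall J K L, ht J = hs K -> ht K = hs L ->
    vcc (assoc J K L) (assoc_inv J K L) = cid (hcomp (hcomp J K) L);
  assoc_iso2 : forall J K L, ht J = hs K -> ht K = hs L ->
    vcc (assoc_inv J K L) (assoc J K L) = cid (hcomp J (hcomp K L));
  assoc_nat : forall a b c, cr a = cl b -> cr b = cl c ->
    vcc (hcc (hcc a b) c) (assoc (ctgt a) (ctgt b) (ctgt c))
    = vcc (assoc (csrc a) (csrc b) (csrc c)) (hcc a (hcc b c));

  lunit_src : forall J, csrc (lunit J) = hcomp (hunit (hs J)) J;
  lunit_tgt : forall J, ctgt (lunit J) = J;
  lunit_l : forall J, cl (lunit J) = vid (hs J);
  lunit_r : forall J, cr (lunit J) = vid (ht J);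
  lunit_inv_src : forall J, csrc (lunit_inv J) = J;
  lunit_inv_tgt : forall J, ctgt (lunit_inv J) = hcomp (hunit (hs J)) J;
  lunit_inv_l : forall J, cl (lunit_inv J) = vid (hs J);
  lunit_inv_r : forall J, cr (lunit_inv J) = vid (ht J);
  lunit_iso1 : forall J, vcc (lunit J) (lunit_inv J) = cid (hcomp (hunit (hs J)) J);
  lunit_iso2 : forall J, vcc (lunit_inv J) (lunit J) = cid J;
  lunit_nat : forall a,
    vcc (hcc (hid (cl a)) a) (lunit (ctgt a)) = vcc (lunit (csrc a)) a;

  runit_src : forall J, csrc (runit J) = hcomp J (hunit (ht J));
  runit_tgt : forall J, ctgt (runit J) = J;
  runit_l : forall J, cl (runit J) = vid (hs J);
  runit_r : forall J, cr (runit J) = vid (ht J);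
  runit_inv_src : forall J, csrc (runit_inv J) = J;
  runit_inv_tgt : forall J, ctgt (runit_inv J) = hcomp J (hunit (ht J));
  runit_inv_l : forall J, cl (runit_inv J) = vid (hs J);
  runit_inv_r : forall J, cr (runit_inv J) = vid (ht J);
  runit_iso1 : forall J, vcc (runit J) (runit_inv J) = cid (hcomp J (hunit (ht J)));
  runit_iso2 : forall J, vcc (runit_inv J) (runit J) = cid J;
  runit_nat : forall a,
    vcc (hcc a (hid (cr a))) (runit (ctgt a)) = vcc (runit (csrc a)) a;

  pentagon : forall J K L M, ht J = hs K -> ht K = hs L -> ht L = hs M ->
    vcc (assoc (hcomp J K) L M) (assoc J K (hcomp L M))
    = vcc (vcc (hcc (assoc J K L) (cid M)) (assoc J (hcomp K L) M))
          (hcc (cid J) (assoc K L M));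
  triangle : forall J K, ht J = hs K ->
    vcc (assoc J (hunit (ht J)) K) (hcc (cid J) (lunit K))
    = hcc (runit J) (cid K)
}.

Section DoubleCatNotions.
Variable D : DoubleCat.

Definition cartesian (a : Cl D) : Prop :=
  forall (x : Cl D) (h k : Vm D),
    ctgt x = ctgt a -> vcod h = vdom (cl a) -> vcod k = vdom (cr a) ->
    cl x = vcomp (cl a) h -> cr x = vcomp (cr a) k ->
    exists! t : Cl D, csrc t = csrc x /\ ctgt t = csrc a /\
                      cl t = h /\ cr t = k /\ vcc t a = x.

Definition opcartesian (a : Cl D) : Prop :=
  forall (x : Cl D) (h k : Vm D),
    csrc x = csrc a -> vdom h = vcod (cl a) -> vdom k = vcod (cr a) ->
    cl x = vcomp h (cl a) -> cr x = vcomp k (cr a) ->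
    exists! t : Cl D, csrc t = ctgt a /\ ctgt t = ctgt x /\
                      cl t = h /\ cr t = k /\ vcc a t = x.

Definition invertible_cell (a : Cl D) : Prop :=
  exists b : Cl D, csrc b = ctgt a /\ ctgt b = csrc a /\
    vcc a b = cid (csrc a) /\ vcc b a = cid (ctgt a).

(* vertical 2-category V(D): 2-cells f => g are cells 1_A => 1_B with sides f, g;
   whiskering is vcc; vertical composition of 2-cells is the horizontal
   composite of cells, followed by the unitors 1_A (.) 1_A ~ 1_A *)
Definition v2comp (a b : Cl D) : Cl D :=
  vcc (vcc (lunit_inv (csrc a)) (hcc a b)) (lunit (ctgt b)).

Definition has_left_adjoint (g : Vm D) : Prop :=
  exists (f : Vm D) (eta eps : Cl D),
    vdom f = vcod g /\ vcod f = vdom g /\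
    csrc eta = hunit (vcod g) /\ ctgt eta = hunit (vcod g) /\
    cl eta = vid (vcod g) /\ cr eta = vcomp g f /\
    csrc eps = hunit (vdom g) /\ ctgt eps = hunit (vdom g) /\
    cl eps = vcomp f g /\ cr eps = vid (vdom g) /\
    v2comp (vcc eta (hid f)) (vcc (hid f) eps) = hid f /\
    v2comp (vcc (hid g) eta) (vcc eps (hid g)) = hid g.

End DoubleCatNotions.

Record Equipment := {
  eK :> DoubleCat;
  companion : Vm eK -> Hm eK;
  compR : Vm eK -> Cl eK;
  compL : Vm eK -> Cl eK;
  conjoint : Vm eK -> Hm eK;
  conjR : Vm eK -> Cl eK;
  compR_src : forall f, csrc (compR f) = companion f;
  compR_tgt : forall f, ctgt (compR f) = hunit (vcod f);
  compR_l : forall f, cl (compR f) = f;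
  compR_r : forall f, cr (compR f) = vid (vcod f);
  compR_cart : forall f, cartesian (compR f);
  compL_src : forall f, csrc (compL f) = hunit (vdom f);
  compL_tgt : forall f, ctgt (compL f) = companion f;
  compL_l : forall f, cl (compL f) = vid (vdom f);
  compL_r : forall f, cr (compL f) = f;
  compL_opcart : forall f, opcartesian (compL f);
  compLR : forall f, vcc (compL f) (compR f) = hid f;
  conjR_src : forall g, csrc (conjR g) = conjoint g;
  conjR_tgt : forall g, ctgt (conjR g) = hunit (vcod g);
  conjR_l : forall g, cl (conjR g) = vid (vcod g);
  conjR_r : forall g, cr (conjR g) = g;
  conjR_cart : forall g, cartesian (conjR g)
}.

Record LaxData (D : DoubleCat) := {
  FO : Ob D -> Ob D;
  FV : Vm D -> Vm D;
  FH : Hm D -> Hm D;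
  FC : Cl D -> Cl D;
  Fcmp : Hm D -> Hm D -> Cl D
}.

Record is_normal_lax (D : DoubleCat) (F : LaxData D) : Prop := {
  FV_dom : forall f, vdom (FV F f) = FO F (vdom f);
  FV_cod : forall f, vcod (FV F f) = FO F (vcod f);
  FV_id : forall A, FV F (vid A) = vid (FO F A);
  FV_comp : forall f g, vcod f = vdom g -> FV F (vcomp g f) = vcomp (FV F g) (FV F f);
  FH_s : forall J, hs (FH F J) = FO F (hs J);
  FH_t : forall J, ht (FH F J) = FO F (ht J);
  FH_unit : forall A, FH F (hunit A) = hunit (FO F A);
  FC_src : forall a, csrc (FC F a) = FH F (csrc a);
  FC_tgt : forall a, ctgt (FC F a) = FH F (ctgt a);
  FC_l : forall a, cl (FC F a) = FV F (cl a);
  FC_r : forall a, cr (FC F a) = FV F (cr a);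
  FC_cid : forall J, FC F (cid J) = cid (FH F J);
  FC_vcc : forall a b, ctgt a = csrc b -> FC F (vcc a b) = vcc (FC F a) (FC F b);
  FC_hid : forall f, FC F (hid f) = hid (FV F f);
  Fcmp_src : forall J K, ht J = hs K -> csrc (Fcmp F J K) = hcomp (FH F J) (FH F K);
  Fcmp_tgt : forall J K, ht J = hs K -> ctgt (Fcmp F J K) = FH F (hcomp J K);
  Fcmp_l : forall J K, ht J = hs K -> cl (Fcmp F J K) = vid (FO F (hs J));
  Fcmp_r : forall J K, ht J = hs K -> cr (Fcmp F J K) = vid (FO F (ht K));
  Fcmp_nat : forall a b, cr a = cl b ->
    vcc (hcc (FC F a) (FC F b)) (Fcmp F (ctgt a) (ctgt b))
    = vcc (Fcmp F (csrc a) (csrc b)) (FC F (hcc a b));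
  Fcmp_assoc : forall J K L, ht J = hs K -> ht K = hs L ->
    vcc (vcc (hcc (Fcmp F J K) (cid (FH F L))) (Fcmp F (hcomp J K) L))
        (FC F (assoc J K L))
    = vcc (vcc (assoc (FH F J) (FH F K) (FH F L))
               (hcc (cid (FH F J)) (Fcmp F K L)))
          (Fcmp F J (hcomp K L));
  Fcmp_lunit : forall J,
    vcc (Fcmp F (hunit (hs J)) J) (FC F (lunit J)) = lunit (FH F J);
  Fcmp_runit : forall J,
    vcc (Fcmp F J (hunit (ht J))) (FC F (runit J)) = runit (FH F J)
}.

Definition lax_id (D : DoubleCat) : LaxData D :=
  {| FO := fun A => A; FV := fun f => f; FH := fun J => J; FC := fun a => a;
     Fcmp := fun J K => cid (hcomp J K) |}.

Definition lax_comp (D : DoubleCat) (F G : LaxData D) : LaxData D :=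
  {| FO := fun A => FO F (FO G A); FV := fun f => FV F (FV G f);
     FH := fun J => FH F (FH G J); FC := fun a => FC F (FC G a);
     Fcmp := fun J K => vcc (Fcmp F (FH G J) (FH G K)) (FC F (Fcmp G J K)) |}.

Record is_dtrans (D : DoubleCat) (F G : LaxData D)
    (aO : Ob D -> Vm D) (aC : Hm D -> Cl D) : Prop := {
  tr_dom : forall A, vdom (aO A) = FO F A;
  tr_cod : forall A, vcod (aO A) = FO G A;
  tr_src : forall J, csrc (aC J) = FH F J;
  tr_tgt : forall J, ctgt (aC J) = FH G J;
  tr_l : forall J, cl (aC J) = aO (hs J);
  tr_r : forall J, cr (aC J) = aO (ht J);
  tr_natV : forall f, vcomp (aO (vcod f)) (FV F f) = vcomp (FV G f) (aO (vdom f));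
  tr_natC : forall a, vcc (FC F a) (aC (ctgt a)) = vcc (aC (csrc a)) (FC G a);
  tr_unit : forall A, aC (hunit A) = hid (aO A);
  tr_comp : forall J K, ht J = hs K ->
    vcc (Fcmp F J K) (aC (hcomp J K)) = vcc (hcc (aC J) (aC K)) (Fcmp G J K)
}.

Record NLaxDoubleMonad (D : DoubleCat) := {
  Tm : LaxData D;
  Tm_lax : is_normal_lax Tm;
  muO : Ob D -> Vm D;  muC : Hm D -> Cl D;
  iotaO : Ob D -> Vm D;  iotaC : Hm D -> Cl D;
  mu_trans : is_dtrans (lax_comp Tm Tm) Tm muO muC;
  iota_trans : is_dtrans (lax_id D) Tm iotaO iotaC;
  mon_assocO : forall A, vcomp (muO A) (FV Tm (muO A)) = vcomp (muO A) (muO (FO Tm A));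
  mon_assocC : forall J, vcc (FC Tm (muC J)) (muC J) = vcc (muC (FH Tm J)) (muC J);
  mon_unitO1 : forall A, vcomp (muO A) (iotaO (FO Tm A)) = vid (FO Tm A);
  mon_unitO2 : forall A, vcomp (muO A) (FV Tm (iotaO A)) = vid (FO Tm A);
  mon_unitC1 : forall J, vcc (iotaC (FH Tm J)) (muC J) = cid (FH Tm J);
  mon_unitC2 : forall J, vcc (FC Tm (iotaC J)) (muC J) = cid (FH Tm J)
}.

(* iota_{J*} : J (.) iota_{B*} => iota_{A*} (.) TJ is the horizontal   *)
(* composite  (1_A => iota_{A*}) | iota_J | (iota_{B*} => 1_{TB}),      *)
(* made globular-typed by the unitors.                                  *)
Definition iota_lower (E : Equipment) (M : NLaxDoubleMonad E) (J : Hm E) : Cl E :=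
  let iA := iotaO M (hs J) in
  let iB := iotaO M (ht J) in
  vcc (vcc (hcc (lunit_inv J) (cid (companion iB)))
           (hcc (hcc (compL iA) (iotaC M J)) (compR iB)))
      (runit (hcomp (companion iA) (FH (Tm M) J))).

Definition right_BC (E : Equipment) (M : NLaxDoubleMonad E) (J : Hm E) : Prop :=
  invertible_cell (iota_lower M J).

(* Main.v *)
Require Import Defs.
Set Implicit Arguments.
Unset Strict Implicit.

Section DC.
Variable D : DoubleCat.
Implicit Types (a b c x y : Cl D) (f g h k : Vm D) (J K L : Hm D) (A B X Y Z : Ob D).

Lemma vcomp_idl' f A : vcod f = A -> vcomp (vid A) f = f.
Proof. intros <-; apply vcomp_id_l. Qed.
Lemma vcomp_idr' f A : vdom f = A -> vcomp f (vid A) = f.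
Proof. intros <-; apply vcomp_id_r. Qed.
Lemma vcc_idl' a J : csrc a = J -> vcc (cid J) a = a.
Proof. intros <-; apply vcc_id_l. Qed.
Lemma vcc_idr' a J : ctgt a = J -> vcc a (cid J) = a.
Proof. intros <-; apply vcc_id_r. Qed.


End DC.

Ltac bext bd := fail.
Ltac bexti bd H := fail.
Ltac bsimp0 bd :=
  first
  [ bext bd | rewrite vid_dom | rewrite vid_cod | rewrite hunit_s | rewrite hunit_t
  | rewrite cid_src | rewrite cid_tgt | rewrite cid_l | rewrite cid_r
  | rewrite hid_src | rewrite hid_tgt | rewrite hid_l | rewrite hid_r
  | rewrite lunit_src | rewrite lunit_tgt | rewrite lunit_l | rewrite lunit_r
  | rewrite lunit_inv_src | rewrite lunit_inv_tgt | rewrite lunit_inv_l | rewrite lunit_inv_r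
  | rewrite runit_src | rewrite runit_tgt | rewrite runit_l | rewrite runit_r
  | rewrite runit_inv_src | rewrite runit_inv_tgt | rewrite runit_inv_l | rewrite runit_inv_r
  | rewrite cl_dom | rewrite cl_cod | rewrite cr_dom | rewrite cr_cod
  | rewrite hid_vid
  | rewrite vcomp_dom by bd | rewrite vcomp_cod by bd
  | rewrite hcomp_s by bd | rewrite hcomp_t by bd
  | rewrite vcc_src by bd | rewrite vcc_tgt by bd | rewrite vcc_l by bd | rewrite vcc_r by bd
  | rewrite hcc_src by bd | rewrite hcc_tgt by bd | rewrite hcc_l by bd | rewrite hcc_r by bd
  | rewrite assoc_src by bd | rewrite assoc_tgt by bd | rewrite assoc_l by bd | rewrite assoc_r by bd
  | rewrite assoc_inv_src by bd | rewrite assoc_inv_tgt by bd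
  | rewrite assoc_inv_l by bd | rewrite assoc_inv_r by bd
  | rewrite vcomp_idl' by bd | rewrite vcomp_idr' by bd
  | rewrite vcomp_assoc by bd ].
Ltac bsimp0i bd H :=
  first
  [ bexti bd H | rewrite vid_dom in H | rewrite vid_cod in H | rewrite hunit_s in H | rewrite hunit_t in H
  | rewrite cid_src in H | rewrite cid_tgt in H | rewrite cid_l in H | rewrite cid_r in H
  | rewrite hid_src in H | rewrite hid_tgt in H | rewrite hid_l in H | rewrite hid_r in H
  | rewrite lunit_src in H | rewrite lunit_tgt in H | rewrite lunit_l in H | rewrite lunit_r in H
  | rewrite lunit_inv_src in H | rewrite lunit_inv_tgt in H | rewrite lunit_inv_l in H | rewrite lunit_inv_r in H
  | rewrite runit_src in H | rewrite runit_tgt in H | rewrite runit_l in H | rewrite runit_r in H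
  | rewrite runit_inv_src in H | rewrite runit_inv_tgt in H | rewrite runit_inv_l in H | rewrite runit_inv_r in H
  | rewrite cl_dom in H | rewrite cl_cod in H | rewrite cr_dom in H | rewrite cr_cod in H
  | rewrite hid_vid in H
  | rewrite vcomp_dom in H by bd | rewrite vcomp_cod in H by bd
  | rewrite hcomp_s in H by bd | rewrite hcomp_t in H by bd
  | rewrite vcc_src in H by bd | rewrite vcc_tgt in H by bd | rewrite vcc_l in H by bd | rewrite vcc_r in H by bd
  | rewrite hcc_src in H by bd | rewrite hcc_tgt in H by bd | rewrite hcc_l in H by bd | rewrite hcc_r in H by bd
  | rewrite assoc_src in H by bd | rewrite assoc_tgt in H by bd | rewrite assoc_l in H by bd | rewrite assoc_r in H by bd
  | rewrite assoc_inv_src in H by bd | rewrite assoc_inv_tgt in H by bd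
  | rewrite assoc_inv_l in H by bd | rewrite assoc_inv_r in H by bd
  | rewrite vcomp_idl' in H by bd | rewrite vcomp_idr' in H by bd
  | rewrite vcomp_assoc in H by bd ].
Ltac bsimp1 bd := first [ bsimp0 bd |
    match goal with H : ?l = _ |- context [?l] =>
      match l with
      | csrc _ => rewrite H | ctgt _ => rewrite H | cl _ => rewrite H | cr _ => rewrite H
      | hs _ => rewrite H | ht _ => rewrite H | vdom _ => rewrite H | vcod _ => rewrite H
      end end ].

Ltac bsimp1i bd H := first [ bsimp0i bd H |
    match goal with H' : ?l = _ |- _ =>
      match l with
      | csrc _ => idtac | ctgt _ => idtac | cl _ => idtac | cr _ => idtac
      | hs _ => idtac | ht _ => idtac | vdom _ => idtac | vcod _ => idtac
      end;
      tryif constr_eq H' H then fail else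
      match type of H with context [l] => rewrite H' in H end end ].
Ltac bd1 := repeat (bsimp1 bd1); first [reflexivity | congruence].
Ltac nrm_in H := repeat (bsimp1i bd1 H).
Ltac add_bnd :=
  repeat match goal with
  | H : cr ?x = ?e |- _ =>
      let P1 := fresh "P" in let P2 := fresh "P" in
      assert (P1 : vdom e = ht (csrc x)) by (rewrite <- H; apply cr_dom);
      assert (P2 : vcod e = ht (ctgt x)) by (rewrite <- H; apply cr_cod);
      revert H; nrm_in P1; nrm_in P2
  | H : cl ?x = ?e |- _ =>
      let P1 := fresh "P" in let P2 := fresh "P" in
      assert (P1 : vdom e = hs (csrc x)) by (rewrite <- H; apply cl_dom);
      assert (P2 : vcod e = hs (ctgt x)) by (rewrite <- H; apply cl_cod);
      revert H; nrm_in P1; nrm_in P2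
  end; intros.
Ltac renrm := repeat match goal with
  | H : vcod (vcomp _ _) = _ |- _ => progress nrm_in H
  | H : vdom (vcomp _ _) = _ |- _ => progress nrm_in H end.
Ltac bd2 := add_bnd; renrm; repeat (bsimp1 bd1); congruence.
Ltac bd := match goal with |- @eq (Cl _) _ _ => fail 1 | _ => idtac end;
  repeat (bsimp1 bd); first [reflexivity | congruence | bd2].
Ltac bnorm := repeat (bsimp1 bd).
Ltac bnorm_in H := repeat (bsimp1i bd H).

Notation "a ;; b" := (vcc a b) (at level 50, left associativity).
Notation "a ** b" := (hcc a b) (at level 40, left associativity).

Section DC2.
Variable D : DoubleCat.
Implicit Types (a b c x y : Cl D) (f g h k : Vm D) (J K L : Hm D) (A B X Y Z : Ob D).

Lemma ri_r_cancel a J : csrc a = J -> runit_inv J ;; (runit J ;; a) = a.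
Proof. intros <-. rewrite vcc_assoc, runit_iso2, vcc_id_l by bd. reflexivity. Qed.
Lemma r_ri_cancel a J : csrc a = hcomp J (hunit (ht J)) -> runit J ;; (runit_inv J ;; a) = a.
Proof. intros H. rewrite vcc_assoc, runit_iso1, <- H, vcc_id_l by bd. reflexivity. Qed.
Lemma li_l_cancel a J : csrc a = J -> lunit_inv J ;; (lunit J ;; a) = a.
Proof. intros <-. rewrite vcc_assoc, lunit_iso2, vcc_id_l by bd. reflexivity. Qed.
Lemma l_li_cancel a J : csrc a = hcomp (hunit (hs J)) J -> lunit J ;; (lunit_inv J ;; a) = a.
Proof. intros H. rewrite vcc_assoc, lunit_iso1, <- H, vcc_id_l by bd. reflexivity. Qed.

Lemma cancel_r x y i j : i ;; j = cid (csrc i) -> ctgt i = csrc j ->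
  ctgt x = csrc i -> ctgt y = csrc i -> x ;; i = y ;; i -> x = y.
Proof.
  intros Hij Hc Hx Hy E.
  rewrite <- (@vcc_idr' D x (csrc i)), <- (@vcc_idr' D y (csrc i)), <- Hij by auto.
  rewrite !vcc_assoc, E by congruence. reflexivity.
Qed.
Lemma cancel_l x y i j : j ;; i = cid (ctgt i) -> ctgt j = csrc i ->
  csrc x = ctgt i -> csrc y = ctgt i -> i ;; x = i ;; y -> x = y.
Proof.
  intros Hij Hc Hx Hy E.
  rewrite <- (@vcc_idl' D x (ctgt i)), <- (@vcc_idl' D y (ctgt i)), <- Hij by auto.
  rewrite <- !vcc_assoc, E by congruence. reflexivity.
Qed.

Lemma runit_iso1' J A : ht J = A -> runit J ;; runit_inv J = cid (hcomp J (hunit A)).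
Proof. intros <-; apply runit_iso1. Qed.
Lemma lunit_iso1' J A : hs J = A -> lunit J ;; lunit_inv J = cid (hcomp (hunit A) J).
Proof. intros <-; apply lunit_iso1. Qed.

Lemma a_ai_cancel r J K L : ht J = hs K -> ht K = hs L -> csrc r = hcomp (hcomp J K) L ->
  assoc J K L ;; (assoc_inv J K L ;; r) = r.
Proof. intros H1 H2 H3. rewrite vcc_assoc, assoc_iso1, vcc_idl' by bd. reflexivity. Qed.
Lemma ai_a_cancel r J K L : ht J = hs K -> ht K = hs L -> csrc r = hcomp J (hcomp K L) ->
  assoc_inv J K L ;; (assoc J K L ;; r) = r.
Proof. intros H1 H2 H3. rewrite vcc_assoc, assoc_iso2, vcc_idl' by bd. reflexivity. Qed.

Lemma split_r1 a b1 b2 : cl b1 = vid (ht (csrc a)) -> cr a = cl b2 -> ctgt b1 = csrc b2 ->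
  a ** (b1 ;; b2) = (cid (csrc a) ** b1) ;; (a ** b2).
Proof. intros H1 H2 H3. rewrite interchange, vcc_idl' by bd. reflexivity. Qed.
Lemma split_r2 a b1 b2 : cl b2 = vid (ht (ctgt a)) -> cr a = cl b1 -> ctgt b1 = csrc b2 ->
  a ** (b1 ;; b2) = (a ** b1) ;; (cid (ctgt a) ** b2).
Proof. intros H1 H2 H3. rewrite interchange, vcc_idr' by bd. reflexivity. Qed.
Lemma split_l1 a1 a2 b : cr a1 = vid (hs (csrc b)) -> cr a2 = cl b -> ctgt a1 = csrc a2 ->
  (a1 ;; a2) ** b = (a1 ** cid (csrc b)) ;; (a2 ** b).
Proof. intros H1 H2 H3. rewrite interchange, vcc_idl' by bd. reflexivity. Qed.
Lemma split_l2 a1 a2 b : cr a2 = vid (hs (ctgt b)) -> cr a1 = cl b -> ctgt a1 = csrc a2 ->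
  (a1 ;; a2) ** b = (a1 ** b) ;; (a2 ** cid (ctgt b)).
Proof. intros H1 H2 H3. rewrite interchange, vcc_idr' by bd. reflexivity. Qed.
Lemma merge_cl J x y : cl x = vid (ht J) -> cl y = vid (ht J) -> ctgt x = csrc y ->
  (cid J ** x) ;; (cid J ** y) = cid J ** (x ;; y).
Proof. intros H1 H1' H2. rewrite interchange, vcc_idl' by bd. reflexivity. Qed.
Lemma merge_cr J x y : cr x = vid (hs J) -> cr y = vid (hs J) -> ctgt x = csrc y ->
  (x ** cid J) ;; (y ** cid J) = (x ;; y) ** cid J.
Proof. intros H1 H1' H2. rewrite interchange, vcc_idl' by bd. reflexivity. Qed.
Lemma merge_cl' J x y r : cl x = vid (ht J) -> cl y = vid (ht J) -> ctgt x = csrc y ->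
  csrc r = hcomp J (ctgt y) -> (cid J ** x) ;; ((cid J ** y) ;; r) = (cid J ** (x ;; y)) ;; r.
Proof. intros H1 H1' H2 H3. rewrite vcc_assoc, merge_cl by bd. reflexivity. Qed.
Lemma merge_cr' J x y r : cr x = vid (hs J) -> cr y = vid (hs J) -> ctgt x = csrc y ->
  csrc r = hcomp (ctgt y) J -> (x ** cid J) ;; ((y ** cid J) ;; r) = ((x ;; y) ** cid J) ;; r.
Proof. intros H1 H1' H2 H3. rewrite vcc_assoc, merge_cr by bd. reflexivity. Qed.
Lemma hcc_cid' J K M : ht J = hs K -> M = hcomp J K -> cid J ** cid K = cid M.
Proof. intros H ->; apply hcc_cid; auto. Qed.

Lemma rn a b c r : a ;; b = c -> ctgt a = csrc b -> ctgt b = csrc r -> a ;; (b ;; r) = c ;; r.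
Proof. intros E H1 H2. rewrite vcc_assoc, E by auto. reflexivity. Qed.

Lemma rn3 a b c e r : a ;; (b ;; c) = e -> ctgt a = csrc b -> ctgt b = csrc c -> ctgt c = csrc r ->
  a ;; (b ;; (c ;; r)) = e ;; r.
Proof. intros E H1 H2 H3. rewrite (vcc_assoc (a := b)), (vcc_assoc (a := a)), E by bd. reflexivity. Qed.

Lemma rfaith a b Y :
  cr a = vid Y -> cr b = vid Y -> csrc a = csrc b -> ctgt a = ctgt b ->
  a ** cid (hunit Y) = b ** cid (hunit Y) -> a = b.
Proof.
  intros Ha Hb Hs Ht E.
  assert (Ea := runit_nat a). assert (Eb := runit_nat b).
  rewrite Ha, hid_vid, E in Ea. rewrite Hb, hid_vid in Eb.
  rewrite Hs, Ht in Ea. rewrite Ea in Eb.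
  rewrite <- (@ri_r_cancel a (csrc a)), <- (@ri_r_cancel b (csrc b)) by reflexivity.
  congruence.
Qed.

Lemma lfaith a b Y :
  cl a = vid Y -> cl b = vid Y -> csrc a = csrc b -> ctgt a = ctgt b ->
  cid (hunit Y) ** a = cid (hunit Y) ** b -> a = b.
Proof.
  intros Ha Hb Hs Ht E.
  assert (Ea := lunit_nat a). assert (Eb := lunit_nat b).
  rewrite Ha, hid_vid, E in Ea. rewrite Hb, hid_vid in Eb.
  rewrite Hs, Ht in Ea. rewrite Ea in Eb.
  rewrite <- (@li_l_cancel a (csrc a)), <- (@li_l_cancel b (csrc b)) by reflexivity.
  congruence.
Qed.

End DC2.

Ltac vsimp1 :=
  first
  [ rewrite <- vcc_assoc by bd
  | rewrite vcc_idl' by bd | rewrite vcc_idr' by bd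
  | rewrite ri_r_cancel by bd | rewrite r_ri_cancel by bd
  | rewrite li_l_cancel by bd | rewrite l_li_cancel by bd
  | rewrite runit_iso2 | rewrite lunit_iso2
  | rewrite runit_iso1 | rewrite lunit_iso1
  | rewrite a_ai_cancel by bd | rewrite ai_a_cancel by bd
  | rewrite assoc_iso1 by bd | rewrite assoc_iso2 by bd
  | rewrite merge_cl' by bd | rewrite merge_cr' by bd
  | rewrite merge_cl by bd | rewrite merge_cr by bd
  | rewrite hcc_cid by bd ].
Ltac vsimp := repeat vsimp1.
Ltac vsimp1i H :=
  first
  [ rewrite <- vcc_assoc in H by bd
  | rewrite vcc_idl' in H by bd | rewrite vcc_idr' in H by bd
  | rewrite ri_r_cancel in H by bd | rewrite r_ri_cancel in H by bd
  | rewrite li_l_cancel in H by bd | rewrite l_li_cancel in H by bd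
  | rewrite runit_iso2 in H | rewrite lunit_iso2 in H
  | rewrite runit_iso1 in H | rewrite lunit_iso1 in H
  | rewrite a_ai_cancel in H by bd | rewrite ai_a_cancel in H by bd
  | rewrite assoc_iso1 in H by bd | rewrite assoc_iso2 in H by bd
  | rewrite merge_cl' in H by bd | rewrite merge_cr' in H by bd
  | rewrite merge_cl in H by bd | rewrite merge_cr in H by bd
  | rewrite hcc_cid in H by bd ].
Ltac vsimp_in H := repeat (vsimp1i H).


Ltac rwr N := first [ rewrite N | rewrite (rn N) by bd | rewrite (rn3 N) by bd ].
Ltac rwl N := first [ rewrite <- N | rewrite <- (rn (eq_sym N)) by bd ].

Section K2.
Variable D : DoubleCat.
Implicit Types (a b c x y : Cl D) (f g h k : Vm D) (J K L : Hm D) (A B X Y Z : Ob D).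

Lemma K2 J K : ht J = hs K ->
  runit (hcomp J K) = assoc J K (hunit (ht K)) ;; (cid J ** runit K).
Proof.
  intros HJK. set (U := hunit (ht K)).
  assert (Pent := @pentagon D J K U U HJK ltac:(subst U; bd) ltac:(subst U; bd)).
  assert (T1 := @triangle D (hcomp J K) U ltac:(subst U; bd)).
  assert (T2 := @triangle D K U ltac:(subst U; bd)).
  assert (N1 := @assoc_nat D (cid J) (cid K) (lunit U) ltac:(bd) ltac:(subst U; bd)).
  assert (N2 := @assoc_nat D (cid J) (runit K) (cid U) ltac:(bd) ltac:(subst U; bd)).
  subst U. bnorm_in Pent. bnorm_in T1. bnorm_in T2. bnorm_in N1. bnorm_in N2.
  set (U := hunit (ht K)) in *.
  assert (E1 : (runit (hcomp J K) ** cid U) ;; assoc J K U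
             = ((assoc J K U ;; (cid J ** runit K)) ** cid U) ;; assoc J K U).
  { rewrite <- T1, <- (hcc_cid HJK).
    rewrite <- vcc_assoc, N1, vcc_assoc, Pent by (subst U; bd).
    rewrite <- (vcc_assoc (c := cid J ** (cid K ** lunit U))) by (subst U; bd).
    rewrite (interchange (a := cid J)) by (subst U; bd).
    rewrite T2, vcc_idl' by (subst U; bd).
    rewrite <- vcc_assoc, <- N2, vcc_assoc by (subst U; bd).
    rewrite (interchange (b := cid U)), vcc_idr' by (subst U; bd). reflexivity. }
  apply (rfaith (Y := ht K)); try (subst U; bd).
  apply (cancel_r (i := assoc J K U) (j := assoc_inv J K U)); try (subst U; bd).
  all: try (subst U; bnorm; apply assoc_iso1; bd).
  all: exact E1.
Qed.
End K2.

Section LR.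
Variable D : DoubleCat.
Lemma lr_unit (X : Ob D) : lunit (hunit X) = runit (hunit X).
Proof.
  set (U := hunit X).
  assert (E2 := K2 (J:=U) (K:=U) ltac:(subst U; bd)).
  assert (T := @triangle D U U ltac:(subst U; bd)).
  assert (N := runit_nat (runit U)).
  subst U. bnorm_in E2. bnorm_in T. bnorm_in N. set (U := hunit X) in *.
  assert (E3 : runit U ** cid U = runit (hcomp U U)).
  { apply (cancel_r (i := runit U) (j := runit_inv U)); try (subst U; bd).
    all: try (subst U; bnorm; apply runit_iso1'; bd).
    all: try exact N. }
  rewrite E3, E2 in T.
  apply (lfaith (Y := X)); try (subst U; bd).
  apply (cancel_l (i := assoc U U U) (j := assoc_inv U U U)); try (subst U; bd).
  all: try (subst U; bnorm; apply assoc_iso2; bd).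
  all: try exact T.
Qed.
End LR.

Section W.
Variable D : DoubleCat.
Implicit Types (a b c x y al be : Cl D) (f g h k : Vm D) (J K L : Hm D) (A B X Y Z : Ob D).

Lemma lri_unit A : lunit_inv (hunit A) = runit_inv (hunit A).
Proof.
  rewrite <- (@vcc_idr' D (lunit_inv (hunit A)) (hcomp (hunit A) (hunit A))) by bd.
  rewrite <- (@runit_iso1' D (hunit A) A) by bd.
  rewrite vcc_assoc, <- lr_unit, lunit_iso2, vcc_idl' by bd. reflexivity.
Qed.

Lemma W1 c al K B : csrc c = K -> ctgt c = hunit B -> csrc al = hunit B -> ctgt al = hunit B ->
  lunit_inv K ;; ((hid (cl c) ;; al) ** (c ;; hid (cr al))) ;; runit (hunit B) = c ;; al.
Proof.
  intros H1 H2 H3 H4.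
  assert (N1 := lunit_nat c). assert (N2 := runit_nat al).
  bnorm_in N1. bnorm_in N2.
  rewrite <- interchange by bd. vsimp.
  rewrite N2, <- lr_unit. rewrite (vcc_assoc (a := hid (cl c) ** c)), N1 by bd. vsimp. reflexivity.
Qed.

Lemma W2 c al K B : csrc c = K -> ctgt c = hunit B -> csrc al = hunit B -> ctgt al = hunit B ->
  runit_inv K ;; ((c ;; hid (cl al)) ** (hid (cr c) ;; al)) ;; runit (hunit B) = c ;; al.
Proof.
  intros H1 H2 H3 H4.
  assert (N1 := runit_nat c). assert (N2 := lunit_nat al).
  bnorm_in N1. bnorm_in N2.
  rewrite <- interchange by bd. vsimp.
  rewrite <- lr_unit, N2, lr_unit. rewrite (vcc_assoc (a := c ** hid (cr c))), N1 by bd. vsimp. reflexivity.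
Qed.
End W.

Section WA.
Variable D : DoubleCat.
Implicit Types (a b c x y al be : Cl D) (f g h k : Vm D) (J K L : Hm D) (A B X Y Z : Ob D).

Lemma LRcoh' K :
  runit_inv K ;; ((lunit_inv K ** cid (hunit (ht K))) ;; (assoc (hunit (hs K)) K (hunit (ht K))
    ;; (cid (hunit (hs K)) ** runit K))) = lunit_inv K.
Proof.
  assert (E := K2 (J := hunit (hs K)) (K := K) ltac:(bd)).
  assert (N := runit_nat (lunit_inv K)). bnorm_in E. bnorm_in N.
  rewrite <- E. rewrite N. vsimp. reflexivity.
Qed.

Lemma LRcoh K :
  lunit_inv K ;; (cid (hunit (hs K)) ** runit_inv K) ;; assoc_inv (hunit (hs K)) K (hunit (ht K))
  = runit_inv K ;; (lunit_inv K ** cid (hunit (ht K))).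
Proof.
  apply (cancel_r (i := assoc (hunit (hs K)) K (hunit (ht K)))
                  (j := assoc_inv (hunit (hs K)) K (hunit (ht K)))); try bd.
  - bnorm. apply assoc_iso1; bd.
  - vsimp.
    apply (cancel_r (i := cid (hunit (hs K)) ** runit K)
                    (j := cid (hunit (hs K)) ** runit_inv K)); try bd.
    + vsimp. bnorm. reflexivity.
    + vsimp. rewrite LRcoh'. reflexivity.
Qed.

Lemma LRcoh_r K r : csrc r = hcomp (hcomp (hunit (hs K)) K) (hunit (ht K)) ->
  lunit_inv K ;; ((cid (hunit (hs K)) ** runit_inv K) ;; (assoc_inv (hunit (hs K)) K (hunit (ht K)) ;; r))
  = runit_inv K ;; ((lunit_inv K ** cid (hunit (ht K))) ;; r).
Proof.
  intros H. assert (E := LRcoh K). rewrite !vcc_assoc by bd. rewrite E. reflexivity.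
Qed.

Lemma UUcoh Y :
  assoc (hunit Y) (hunit Y) (hunit Y) ;; ((cid (hunit Y) ** runit (hunit Y)) ;; runit (hunit Y))
  = (runit (hunit Y) ** cid (hunit Y)) ;; runit (hunit Y).
Proof.
  assert (E := K2 (J := hunit Y) (K := hunit Y) ltac:(bd)).
  assert (N := runit_nat (runit (hunit Y))). bnorm_in E. bnorm_in N.
  rewrite N, E. vsimp. reflexivity.
Qed.

Lemma TRIcoh K r : csrc r = hcomp (hcomp K (hunit (ht K))) (hunit (ht K)) ->
  (cid K ** lunit_inv (hunit (ht K))) ;; (assoc_inv K (hunit (ht K)) (hunit (ht K)) ;; r)
  = (runit_inv K ** cid (hunit (ht K))) ;; r.
Proof.
  intros H. rewrite !vcc_assoc by bd. f_equal.
  set (U := hunit (ht K)).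
  assert (T := @triangle D K U ltac:(subst U; bd)). subst U. bnorm_in T.
  apply (cancel_r (i := runit K ** cid (hunit (ht K))) (j := runit_inv K ** cid (hunit (ht K)))); try bd.
  - vsimp. bnorm. reflexivity.
  - vsimp. rewrite <- T. vsimp. bnorm. reflexivity.
Qed.

Lemma assoc_nat' a b c : cr a = cl b -> cr b = cl c ->
  a ** (b ** c) = assoc_inv (csrc a) (csrc b) (csrc c) ;; (((a ** b) ** c) ;; assoc (ctgt a) (ctgt b) (ctgt c)).
Proof.
  intros H1 H2. rewrite (assoc_nat H1 H2). vsimp. reflexivity.
Qed.

Lemma WA c al be K Y : csrc c = K -> ctgt c = hunit Y ->
  csrc al = hunit (hs K) -> ctgt al = hunit Y -> cr al = cl c ->
  csrc be = hunit (ht K) -> ctgt be = hunit Y -> cl be = cr c ->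
  lunit_inv K ;; ((al ** (runit_inv K ;; ((c ** be) ;; runit (hunit Y)))) ;; runit (hunit Y))
  = runit_inv K ;; (((lunit_inv K ;; ((al ** c) ;; runit (hunit Y))) ** be) ;; runit (hunit Y)).
Proof.
  intros H1 H2 H3 H4 H5 H6 H7 H8.
  rewrite (split_r1 (a := al) (b1 := runit_inv K)) by bd.
  rewrite (split_r2 (a := al) (b1 := c ** be)) by bd.
  rewrite (assoc_nat' (a := al)) by bd.
  rewrite (split_l1 (a1 := lunit_inv K)) by bd.
  rewrite (split_l2 (a1 := al ** c)) by bd.
  bnorm. vsimp. rewrite LRcoh_r by bd. rewrite UUcoh. reflexivity.
Qed.

Lemma RA c b1 b2 K Y : csrc c = K -> ctgt c = hunit Y ->
  csrc b1 = hunit (ht K) -> ctgt b1 = hunit Y -> cl b1 = cr c ->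
  csrc b2 = hunit (ht K) -> ctgt b2 = hunit Y -> cl b2 = cr b1 ->
  runit_inv K ;; (((runit_inv K ;; ((c ** b1) ;; runit (hunit Y))) ** b2) ;; runit (hunit Y))
  = runit_inv K ;; ((c ** (lunit_inv (hunit (ht K)) ;; ((b1 ** b2) ;; runit (hunit Y)))) ;; runit (hunit Y)).
Proof.
  intros H1 H2 H3 H4 H5 H6 H7 H8.
  rewrite (split_l1 (a1 := runit_inv K)) by bd.
  rewrite (split_l2 (a1 := c ** b1)) by bd.
  rewrite (split_r1 (a := c) (b1 := lunit_inv (hunit (ht K)))) by bd.
  rewrite (split_r2 (a := c) (b1 := b1 ** b2)) by bd.
  rewrite (assoc_nat' (a := c)) by bd.
  bnorm. vsimp. rewrite TRIcoh by bd. rewrite UUcoh. reflexivity.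
Qed.
End WA.

Section C.
Variable D : DoubleCat.
Implicit Types (a b c x y al be q rh t : Cl D) (f g h k u v : Vm D) (J K L P Q : Hm D) (A B X Y Z : Ob D).

Lemma lunit_from_Z2 q rh Q : csrc q = hunit (hs Q) -> ctgt q = Q -> cr q = cl rh ->
  csrc rh = Q -> ctgt rh = hunit (ht Q) ->
  lunit_inv Q ;; ((q ** rh) ;; runit Q) = cid Q -> (q ** rh) ;; runit Q = lunit Q.
Proof.
  intros H1 H2 H3 H4 H5 E.
  rewrite <- (@l_li_cancel D ((q ** rh) ;; runit Q) Q) by bd. rewrite E. vsimp. reflexivity.
Qed.

Lemma ext_opcart q rh v P Q :
  csrc q = hunit (hs Q) -> ctgt q = Q -> cl q = vid (hs Q) -> cr q = v ->
  csrc rh = Q -> ctgt rh = hunit (ht Q) -> cl rh = v -> cr rh = vid (ht Q) ->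
  q ;; rh = hid v -> lunit_inv Q ;; ((q ** rh) ;; runit Q) = cid Q ->
  ht P = hs Q -> opcartesian (runit_inv P ;; (cid P ** q)).
Proof.
  intros H1 H2 H3 H4 H5 H6 H7 H8 Z1 Z2 HPQ.
  assert (Lq : (q ** rh) ;; runit Q = lunit Q). { apply lunit_from_Z2; try assumption; bd. }
  intros x h k Hx Hh Hk Hl Hr. bnorm_in Hx. bnorm_in Hh. bnorm_in Hk. bnorm_in Hl. bnorm_in Hr.
  exists ((x ** (rh ;; hid k)) ;; runit (ctgt x)). split; [repeat split|].
  - bd.
  - bd.
  - bd.
  - bd.
  - vsimp. rewrite (vcc_assoc (a := cid P ** q)) by bd.
    rewrite interchange by bd. rewrite (vcc_assoc (a := q)), Z1, hid_vcomp by bd.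
    rewrite vcc_idl' by bd.
    assert (N := runit_nat x). bnorm_in N. rewrite N. vsimp. reflexivity.
  - intros t' [T1 [T2 [T3 [T4 T5]]]].
    rewrite <- T5. bnorm.
    rewrite <- (interchange (a := runit_inv P ;; (cid P ** q)) (b := rh)) by bd.
    assert (N := runit_nat t'). bnorm_in N. vsimp. rewrite N.
    assert (W : ((runit_inv P ;; (cid P ** q)) ** rh) ;; runit (hcomp P Q) = cid (hcomp P Q)).
    { rewrite (split_l1 (a1 := runit_inv P)) by bd.
      assert (E := K2 (J := P) (K := Q) HPQ). rewrite E.
      assert (N2 := assoc_nat (a := cid P) (b := q) (c := rh) ltac:(bd) ltac:(bd)).
      bnorm_in N2. vsimp. rwr N2. vsimp. rewrite Lq.
      assert (T := @triangle D P Q HPQ). bnorm_in T. rewrite T. bnorm. vsimp. bnorm. reflexivity. }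
    rwr W. vsimp. reflexivity.
Qed.

Lemma comp_opcart q rh v Q :
  csrc q = hunit (hs Q) -> ctgt q = Q -> cl q = vid (hs Q) -> cr q = v ->
  csrc rh = Q -> ctgt rh = hunit (ht Q) -> cl rh = v -> cr rh = vid (ht Q) ->
  q ;; rh = hid v -> lunit_inv Q ;; ((q ** rh) ;; runit Q) = cid Q ->
  opcartesian q.
Proof.
  intros H1 H2 H3 H4 H5 H6 H7 H8 Z1 Z2.
  assert (Lq : q ;; lunit_inv Q = lunit_inv (hunit (hs Q)) ;; (cid (hunit (hs Q)) ** q)).
  { assert (N := lunit_nat q). bnorm_in N.
    apply (cancel_r (i := lunit Q) (j := lunit_inv Q)); try bd.
    - bnorm. apply lunit_iso1'. bd.
    - vsimp. rewrite N. vsimp. reflexivity. }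
  intros x h k Hx Hh Hk Hl Hr. bnorm_in Hx. bnorm_in Hh. bnorm_in Hk. bnorm_in Hl. bnorm_in Hr.
  exists (lunit_inv Q ;; ((x ** (rh ;; hid k)) ;; runit (ctgt x))). split; [repeat split|].
  - bd.
  - bd.
  - bd.
  - bd.
  - rwr Lq. vsimp. rewrite (vcc_assoc (a := cid (hunit (hs Q)) ** q)) by bd.
    rewrite interchange by bd. rewrite (vcc_assoc (a := q)), Z1, hid_vcomp by bd.
    rewrite vcc_idl' by bd.
    assert (N := runit_nat x). bnorm_in N. rewrite N. rewrite lri_unit. vsimp. reflexivity.
  - intros t' [T1 [T2 [T3 [T4 T5]]]].
    rewrite <- T5. bnorm.
    rewrite <- (interchange (a := q) (b := rh)) by bd.
    assert (N := runit_nat t'). bnorm_in N. vsimp. rewrite N.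
    rwr Z2. vsimp. reflexivity.
Qed.

Lemma vcomp_opcart a b : opcartesian (D:=D) a -> opcartesian (D:=D) b -> ctgt a = csrc b -> opcartesian (a ;; b).
Proof.
  intros Oa Ob Hab x h k Hx Hh Hk Hl Hr. bnorm_in Hx. bnorm_in Hh. bnorm_in Hk. bnorm_in Hl. bnorm_in Hr.
  destruct (Oa x (vcomp h (cl b)) (vcomp k (cr b))) as [t1 [[S1 [S2 [S3 [S4 S5]]]] U1]]; try bd.
  destruct (Ob t1 h k) as [t2 [[R1 [R2 [R3 [R4 R5]]]] U2]]; try bd.
  exists t2. split; [repeat split|].
  - bd.
  - bd.
  - bd.
  - bd.
  - rewrite <- (vcc_assoc (a:=a) (b:=b) (c:=t2)) by bd. rewrite R5. exact S5.
  - intros t' [T1 [T2 [T3 [T4 T5]]]].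
    apply U2. repeat split; try bd.
    symmetry. apply U1. repeat split; try bd.
    rewrite vcc_assoc by bd. exact T5.
Qed.

Lemma inv_of_opcart o1 o2 ph : opcartesian (D:=D) o1 -> opcartesian (D:=D) o2 -> o1 ;; ph = o2 ->
  ctgt o1 = csrc ph -> cl ph = vid (hs (csrc ph)) -> cr ph = vid (ht (csrc ph)) ->
  invertible_cell (D:=D) ph.
Proof.
  intros O1 O2 E H1 H2 H3.
  destruct (O2 o1 (vid (hs (csrc ph))) (vid (ht (csrc ph)))) as [ps [[S1 [S2 [S3 [S4 S5]]]] U]];
    try (subst o2; bd).
  exists ps. split; [|split; [|split]]; try (subst o2; bd).
  - destruct (O1 o1 (vid (hs (csrc ph))) (vid (ht (csrc ph)))) as [t [_ U1]]; try bd.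
    rewrite <- (U1 (ph ;; ps)), <- (U1 (cid (csrc ph))); auto; repeat split; try (subst o2; bd).
    all: first [ rewrite vcc_idr' by (subst o2; bd); reflexivity
               | rewrite vcc_assoc by (subst o2; bd); rewrite ?E, ?S5; first [reflexivity | exact S5 | exact E] ].
  - destruct (O2 o2 (vid (hs (csrc ph))) (vid (ht (csrc ph)))) as [t [_ U2]]; try (subst o2; bd).
    rewrite <- (U2 (ps ;; ph)), <- (U2 (cid (ctgt ph))); auto; repeat split; try (subst o2; bd).
    all: first [ rewrite vcc_idr' by (subst o2; bd); reflexivity
               | rewrite vcc_assoc by (subst o2; bd); rewrite ?E, ?S5; first [reflexivity | exact S5 | exact E] ].
Qed.

Lemma runit_nat_inv a : a ;; runit_inv (ctgt a) = runit_inv (csrc a) ;; (a ** hid (cr a)).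
Proof.
  apply (cancel_r (i := runit (ctgt a)) (j := runit_inv (ctgt a))); try bd.
  - bnorm. apply runit_iso1.
  - vsimp. rewrite runit_nat. vsimp. reflexivity.
Qed.
Lemma lunit_nat_inv a : a ;; lunit_inv (ctgt a) = lunit_inv (csrc a) ;; (hid (cl a) ** a).
Proof.
  apply (cancel_r (i := lunit (ctgt a)) (j := lunit_inv (ctgt a))); try bd.
  - bnorm. apply lunit_iso1.
  - vsimp. rewrite lunit_nat. vsimp. reflexivity.
Qed.
Lemma runit_nat_inv' a J : ctgt a = J -> a ;; runit_inv J = runit_inv (csrc a) ;; (a ** hid (cr a)).
Proof. intros <-; apply runit_nat_inv. Qed.
Lemma lunit_nat_inv' a J : ctgt a = J -> a ;; lunit_inv J = lunit_inv (csrc a) ;; (hid (cl a) ** a).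
Proof. intros <-; apply lunit_nat_inv. Qed.
End C.

Section EB.
Variable E : Equipment.
Implicit Types (f g : Vm E).
Lemma hs_comp f : hs (companion f) = vdom f.
Proof. rewrite <- (compR_src f), <- cl_dom, compR_l. reflexivity. Qed.
Lemma ht_comp f : ht (companion f) = vcod f.
Proof. rewrite <- (compR_src f), <- cr_dom, compR_r, vid_dom. reflexivity. Qed.
Lemma hs_conj g : hs (conjoint g) = vcod g.
Proof. rewrite <- (conjR_src g), <- cl_dom, conjR_l, vid_dom. reflexivity. Qed.
Lemma ht_conj g : ht (conjoint g) = vdom g.
Proof. rewrite <- (conjR_src g), <- cr_dom, conjR_r. reflexivity. Qed.
End EB.

Section MB.
Variable D : DoubleCat.
Variable M : NLaxDoubleMonad D.
Lemma iota_dom A : vdom (iotaO M A) = A.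
Proof. rewrite (tr_dom (iota_trans M)). reflexivity. Qed.
Lemma iota_cod A : vcod (iotaO M A) = FO (Tm M) A.
Proof. rewrite (tr_cod (iota_trans M)). reflexivity. Qed.
Lemma iotaC_src J : csrc (iotaC M J) = J.
Proof. rewrite (tr_src (iota_trans M)). reflexivity. Qed.
Lemma iotaC_tgt J : ctgt (iotaC M J) = FH (Tm M) J.
Proof. rewrite (tr_tgt (iota_trans M)). reflexivity. Qed.
Lemma iotaC_l J : cl (iotaC M J) = iotaO M (hs J).
Proof. rewrite (tr_l (iota_trans M)). reflexivity. Qed.
Lemma iotaC_r J : cr (iotaC M J) = iotaO M (ht J).
Proof. rewrite (tr_r (iota_trans M)). reflexivity. Qed.
Lemma iotaC_unit A : iotaC M (hunit A) = hid (iotaO M A).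
Proof. rewrite (tr_unit (iota_trans M)). reflexivity. Qed.
End MB.

Ltac bext bd ::=
  first
  [ rewrite compR_src | rewrite compR_tgt | rewrite compR_l | rewrite compR_r
  | rewrite compL_src | rewrite compL_tgt | rewrite compL_l | rewrite compL_r
  | rewrite conjR_src | rewrite conjR_tgt | rewrite conjR_l | rewrite conjR_r
  | rewrite hs_comp | rewrite ht_comp | rewrite hs_conj | rewrite ht_conj
  | rewrite iota_dom | rewrite iota_cod | rewrite iotaC_src | rewrite iotaC_tgt
  | rewrite iotaC_l | rewrite iotaC_r | rewrite iotaC_unit
  | rewrite FV_dom by apply Tm_lax | rewrite FV_cod by apply Tm_lax
  | rewrite FV_id by apply Tm_lax
  | rewrite FH_s by apply Tm_lax | rewrite FH_t by apply Tm_lax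
  | rewrite FH_unit by apply Tm_lax
  | rewrite FC_src by apply Tm_lax | rewrite FC_tgt by apply Tm_lax
  | rewrite FC_l by apply Tm_lax | rewrite FC_r by apply Tm_lax
  | rewrite FC_hid by apply Tm_lax | rewrite FC_cid by apply Tm_lax 
  | rewrite Fcmp_src by first [apply Tm_lax | bd] | rewrite Fcmp_tgt by first [apply Tm_lax | bd]
  | rewrite Fcmp_l by first [apply Tm_lax | bd] | rewrite Fcmp_r by first [apply Tm_lax | bd] ].

Ltac bexti bd H ::=
  first
  [ rewrite compR_src in H | rewrite compR_tgt in H | rewrite compR_l in H | rewrite compR_r in H
  | rewrite compL_src in H | rewrite compL_tgt in H | rewrite compL_l in H | rewrite compL_r in H
  | rewrite conjR_src in H | rewrite conjR_tgt in H | rewrite conjR_l in H | rewrite conjR_r in H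
  | rewrite hs_comp in H | rewrite ht_comp in H | rewrite hs_conj in H | rewrite ht_conj in H
  | rewrite iota_dom in H | rewrite iota_cod in H | rewrite iotaC_src in H | rewrite iotaC_tgt in H
  | rewrite iotaC_l in H | rewrite iotaC_r in H | rewrite iotaC_unit in H
  | rewrite FV_dom in H by apply Tm_lax | rewrite FV_cod in H by apply Tm_lax
  | rewrite FV_id in H by apply Tm_lax
  | rewrite FH_s in H by apply Tm_lax | rewrite FH_t in H by apply Tm_lax
  | rewrite FH_unit in H by apply Tm_lax
  | rewrite FC_src in H by apply Tm_lax | rewrite FC_tgt in H by apply Tm_lax
  | rewrite FC_l in H by apply Tm_lax | rewrite FC_r in H by apply Tm_lax
  | rewrite FC_hid in H by apply Tm_lax | rewrite FC_cid in H by apply Tm_lax 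
  | rewrite Fcmp_src in H by first [apply Tm_lax | bd] | rewrite Fcmp_tgt in H by first [apply Tm_lax | bd]
  | rewrite Fcmp_l in H by first [apply Tm_lax | bd] | rewrite Fcmp_r in H by first [apply Tm_lax | bd] ].

Section EQ.
Variable E : Equipment.
Implicit Types (a b c x y t : Cl E) (f g h k : Vm E) (J K L P Q : Hm E).

Lemma compZ2 f : lunit_inv (companion f) ;; ((compL f ** compR f) ;; runit (companion f)) = cid (companion f).
Proof.
  destruct (compR_cart (f := f) (x := compR f) (h := vid (vdom f)) (k := vid (vcod f))) as [t [_ U]];
    try bd.
  transitivity t; [symmetry|]; apply U; repeat split; try bd; try (vsimp; reflexivity).
  assert (N1 := runit_nat (compR f)). assert (N2 := lunit_nat (compR f)).
  bnorm_in N1. bnorm_in N2. vsimp. rewrite <- N1. vsimp.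
  rewrite (vcc_assoc (a := compL f ** compR f)) by bd.
  rewrite interchange, compLR, vcc_idr' by bd. rewrite <- lr_unit. rewrite N2. vsimp. reflexivity.
Qed.
End EQ.

Section ADJ.
Variable E : Equipment.
Variables (g f : Vm E) (eta eps : Cl E).
Hypotheses (Hfd : vdom f = vcod g) (Hfc : vcod f = vdom g)
  (He1 : csrc eta = hunit (vcod g)) (He2 : ctgt eta = hunit (vcod g))
  (He3 : cl eta = vid (vcod g)) (He4 : cr eta = vcomp g f)
  (Hp1 : csrc eps = hunit (vdom g)) (Hp2 : ctgt eps = hunit (vdom g))
  (Hp3 : cl eps = vcomp f g) (Hp4 : cr eps = vid (vdom g))
  (T1 : v2comp (vcc eta (hid f)) (vcc (hid f) eps) = hid f)
  (T2 : v2comp (vcc (hid g) eta) (vcc eps (hid g)) = hid g).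

Lemma theta_data : exists th rh,
  csrc th = hunit (vcod g) /\ ctgt th = conjoint g /\ cl th = vid (vcod g) /\ cr th = f /\
  csrc rh = conjoint g /\ ctgt rh = hunit (vdom g) /\ cl rh = f /\ cr rh = vid (vdom g) /\
  th ;; rh = hid f /\
  lunit_inv (conjoint g) ;; ((th ** rh) ;; runit (conjoint g)) = cid (conjoint g).
Proof.
  destruct (conjR_cart (g := g) (x := eta) (h := vid (vcod g)) (k := f)) as [th [[S1 [S2 [S3 [S4 S5]]]] _]].
  all: try bd.
  bnorm_in S1. bnorm_in S2. bnorm_in S3. bnorm_in S4.
  set (K := conjoint g) in *.
  exists th, (runit_inv K ;; (((conjR g ;; hid f) ** eps) ;; runit (hunit (vdom g)))).
  repeat split.
  all: try (subst K; bd).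
  -
    rewrite (vcc_assoc (a := th)) by (subst K; bd).
    rewrite runit_nat_inv' by (subst K; bd). subst K. bnorm. vsimp.
    rewrite (vcc_assoc (a := th ** hid f)) by bd.
    rewrite interchange by bd. rewrite (vcc_assoc (a := th)), S5 by bd.
    unfold v2comp in T1. bnorm_in T1. rewrite lr_unit, lri_unit in T1.
    rewrite vcc_assoc by bd. exact T1.
  -
    subst K.
    destruct (conjR_cart (g := g) (x := conjR g) (h := vid (vcod g)) (k := vid (vdom g))) as [t [_ U]].
    all: try bd.
    transitivity t; [symmetry|]; apply U; repeat split; try bd; try (vsimp; reflexivity).
    vsimp.
    assert (N := runit_nat (conjR g)). bnorm_in N. rewrite <- N.
    rewrite (vcc_assoc (a := th ** _)) by bd. rewrite interchange by bd.
    rewrite S5.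
    assert (N3 := runit_nat (hid g)). bnorm_in N3. vsimp. rewrite <- N3.
    rewrite (vcc_assoc (a := (conjR g ;; hid f) ** eps)) by bd. rewrite interchange by bd.
    rewrite <- (vcc_assoc (a := conjR g)), hid_vcomp by bd.
    rewrite (WA (c := conjR g ;; hid (vcomp g f)) (al := eta) (be := eps ;; hid g) (K := conjoint g) (Y := vcod g)) by bd.
    assert (W1i := W1 (c := conjR g) (al := eta) (K := conjoint g) (B := vcod g) ltac:(bd) ltac:(bd) ltac:(bd) ltac:(bd)).
    assert (W2i := W2 (c := conjR g) (al := eta) (K := conjoint g) (B := vcod g) ltac:(bd) ltac:(bd) ltac:(bd) ltac:(bd)).
    bnorm_in W1i. vsimp_in W1i. bnorm_in W2i. vsimp_in W2i.
    rewrite W1i. rewrite <- W2i.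
    rewrite (RA (c := conjR g) (b1 := hid g ;; eta) (b2 := eps ;; hid g) (K := conjoint g) (Y := vcod g)) by bd.
    unfold v2comp in T2. bnorm_in T2. rewrite lr_unit in T2. vsimp_in T2. bnorm. rewrite T2.
    rewrite N. vsimp. reflexivity.
Qed.
End ADJ.

Section MAIN.
Variable E : Equipment.
Variable M : NLaxDoubleMonad E.
Variables (g f : Vm E) (th rh : Cl E).
Hypotheses (Hfd : vdom f = vcod g) (Hfc : vcod f = vdom g)
  (S1 : csrc th = hunit (vcod g)) (S2 : ctgt th = conjoint g) (S3 : cl th = vid (vcod g)) (S4 : cr th = f)
  (R1 : csrc rh = conjoint g) (R2 : ctgt rh = hunit (vdom g)) (R3 : cl rh = f) (R4 : cr rh = vid (vdom g))
  (Z1 : th ;; rh = hid f)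
  (Z2 : lunit_inv (conjoint g) ;; ((th ** rh) ;; runit (conjoint g)) = cid (conjoint g)).

Lemma TZ1 : FC (Tm M) th ;; FC (Tm M) rh = hid (FV (Tm M) f).
Proof. rewrite <- (FC_vcc (Tm_lax M)) by bd. rewrite Z1. apply (FC_hid (Tm_lax M)). Qed.

Lemma TZ2 : lunit_inv (FH (Tm M) (conjoint g)) ;; ((FC (Tm M) th ** FC (Tm M) rh) ;; runit (FH (Tm M) (conjoint g)))
  = cid (FH (Tm M) (conjoint g)).
Proof.
  assert (Nn := Fcmp_nat (Tm_lax M) (a := th) (b := rh) ltac:(bd)).
  assert (Nr := Fcmp_runit (Tm_lax M) (conjoint g)). assert (Nl := Fcmp_lunit (Tm_lax M) (conjoint g)).
  bnorm_in Nn. bnorm_in Nr. bnorm_in Nl.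
  assert (Fl : Fcmp (Tm M) (hunit (vcod g)) (conjoint g)
     = lunit (FH (Tm M) (conjoint g)) ;; FC (Tm M) (lunit_inv (conjoint g))).
  { rewrite <- Nl. rewrite <- vcc_assoc by bd. rewrite <- (FC_vcc (Tm_lax M)) by bd.
    rewrite lunit_iso1, (FC_cid (Tm_lax M)). bnorm. rewrite vcc_idr' by bd. reflexivity. }
  rewrite <- Nr. rwr Nn. rewrite Fl. vsimp.
  rewrite <- !(FC_vcc (Tm_lax M)) by bd. rewrite Z2. apply (FC_cid (Tm_lax M)).
Qed.

Lemma comp_eq :
  (th ;; (runit_inv (conjoint g) ;; (cid (conjoint g) ** compL (iotaO M (vdom g))))) ;; iota_lower M (conjoint g)
  = compL (iotaO M (vcod g)) ;; (runit_inv (companion (iotaO M (vcod g)))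
       ;; (cid (companion (iotaO M (vcod g))) ** FC (Tm M) th)).
Proof.
  unfold iota_lower. bnorm. vsimp.
  set (iA := iotaO M (vcod g)). set (iC := iotaO M (vdom g)). set (K := conjoint g).
  rewrite (vcc_assoc (a := cid K ** compL iC)) by (subst iA iC K; bd).
  rewrite interchange by (subst iA iC K; bd). subst iA iC K. vsimp.
  rewrite (vcc_assoc (a := lunit_inv (conjoint g) ** compL (iotaO M (vdom g)))) by bd.
  rewrite interchange by bd. rewrite compLR.
  match goal with |- context [ (?Y ** hid (iotaO M (vdom g))) ;; ?R ] =>
    assert (N := runit_nat Y); bnorm_in N; rewrite N end.
  vsimp.
  rewrite (vcc_assoc (a := th)) by bd. rewrite lunit_nat_inv' by bd. bnorm. vsimp.
  idtac.
  rewrite interchange by bd. vsimp.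
  assert (Nt := tr_natC (iota_trans M) th). cbn [FC lax_id] in Nt. bnorm_in Nt. rewrite Nt.
  rewrite (vcc_assoc (a := compL (iotaO M (vcod g)))) by bd. rewrite runit_nat_inv' by bd. bnorm. vsimp.
  idtac.
  rewrite interchange by bd. vsimp. rewrite lri_unit. reflexivity.
Qed.
End MAIN.

Theorem corollary5p7 (E : Equipment) (M : NLaxDoubleMonad E) (g : Vm E) :
  has_left_adjoint g -> right_BC M (conjoint g).
Proof.
  intros [f [eta [eps [Hfd [Hfc [He1 [He2 [He3 [He4 [Hp1 [Hp2 [Hp3 [Hp4 [T1 T2]]]]]]]]]]]]]].
  destruct (theta_data Hfd Hfc He1 He2 He3 He4 Hp1 Hp2 Hp3 Hp4 T1 T2)
    as [th [rh [S1 [S2 [S3 [S4 [R1 [R2 [R3 [R4 [Z1 Z2]]]]]]]]]]].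
  unfold right_BC.
  apply (inv_of_opcart
    (o1 := th ;; (runit_inv (conjoint g) ;; (cid (conjoint g) ** compL (iotaO M (vdom g)))))
    (o2 := compL (iotaO M (vcod g)) ;; (runit_inv (companion (iotaO M (vcod g)))
       ;; (cid (companion (iotaO M (vcod g))) ** FC (Tm M) th)))).
  - apply vcomp_opcart.
    + apply (comp_opcart (rh := rh) (v := f) (Q := conjoint g)); auto; bd.
    + apply (ext_opcart (rh := compR (iotaO M (vdom g))) (v := iotaO M (vdom g))
               (Q := companion (iotaO M (vdom g)))); try bd.
      * apply compLR.
      * apply compZ2.
    + bd.
  - apply vcomp_opcart.
    + apply compL_opcart.
    + apply (ext_opcart (rh := FC (Tm M) rh) (v := FV (Tm M) f) (Q := FH (Tm M) (conjoint g))); try bd.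
      * apply (TZ1 M (g := g) (th := th) (rh := rh)); auto.
      * apply (TZ2 M (g := g) (f := f) (th := th) (rh := rh)); auto.
    + bd.
  - apply (comp_eq M (g := g) (th := th)); auto.
  - unfold iota_lower. bd.
  - unfold iota_lower. bd.
  - unfold iota_lower. bd.
Qed.
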